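(* Let $\mathbf{M}\in\mathbb{R}^{n\times n}$ be symmetric positive definite, let $V=\{1,\dots,n\}$, and let $P(V)$ be a partition of $V$ into disjoint nonempty blocks. Fix a block $B\in P(V)$. Let $N_1,\dots,N_g\in P(V)\setminus\{B\}$ be the blocks $D$ with $\mathbf{M}_{BD}\neq 0$, put $N=N_1\cup\dots\cup N_g$, and let $W=V\setminus(B\cup N)$ (so $\mathbf{M}_{BW}=0$). Let $\mathbf{\Pi}\in\mathbb{R}^{n\times \pi}$ be any matrix. Let $\mathbf{M}_{BB}=\mathbf{L}\mathbf{L}^T$ be the Cholesky factorization, set $\widehat{\mathbf{M}}_{BN_j}=\mathbf{L}^{-1}\mathbf{M}_{BN_j}$, $\widehat{\mathbf{M}}_{BN}=\mathbf{L}^{-1}\mathbf{M}_{BN}$, $\widehat{\mathbf{M}}_{NB}=\widehat{\mathbf{M}}_{BN}^T$, $\mathbf{\Phi}_B=\mathbf{\Pi}(B,:)$, $\mathbf{\Phi}_{N_j}=\mathbf{\Pi}(N_j,:)$, and define the $|B|\times (g+1)\pi$ matrix $$\mathbf{N}=\begin{pmatrix}\mathbf{L}^T\mathbf{\Phi}_B & \widehat{\mathbf{M}}_{BN_1}\mathbf{\Phi}_{N_1} & \cdots & \widehat{\mathbf{M}}_{BN_g}\mathbf{\Phi}_{N_g}\end{pmatrix}.$$ Let $\mathbf{Q}=(\mathbf{Q}_1\ \mathbf{Q}_2)$ be an orthogonal $|B|\times|B|$ matrix whose first block of columns $\mathbf{Q}_1$ is an orthonormal basis of the range of $\mathbf{N}$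 (and $\mathbf{Q}_2$ an orthonormal basis of its orthogonal complement). With the variables ordered as $(B,N,W)$ and the $B$-block further split according to $(\mathbf{Q}_1,\mathbf{Q}_2)$, define $$\mathbf{\mathcal{B}}=\begin{pmatrix}\mathbf{L}\mathbf{Q} & \\ & \mathbf{I}\end{pmatrix},\qquad \mathbf{M}_{(+)}=\begin{pmatrix}\mathbf{I} & 0 & \mathbf{Q}_1^T\widehat{\mathbf{M}}_{BN} & 0\\ 0 & \mathbf{I} & 0 & 0\\ \widehat{\mathbf{M}}_{NB}\mathbf{Q}_1 & 0 & \mathbf{M}_{NN} & \mathbf{M}_{NW}\\ 0 & 0 & \mathbf{M}_{WN} & \mathbf{M}_{WW}\end{pmatrix},\qquad \widetilde{\mathbf{M}}=\mathbf{\mathcal{B}}\,\mathbf{M}_{(+)}\,\mathbf{\mathcal{B}}^T.$$ Then for every block $D\in P(V)$ we have $\mathbf{M}\mathbf{\Pi}_D=\widetilde{\mathbf{M}}\mathbf{\Pi}_D$, where $\mathbf{\Pi}_D\in\mathbb{R}^{n\times\pi}$ is defined by $(\mathbf{\Pi}_D)_{ij}=\mathbf{\Pi}_{ij}$ if $i\in D$ and $0$ otherwise. Moreover, $\widetilde{\mathbf{M}}$ is symmetric positive definite.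
   Context: In the application, the columns of $\mathbf{\Pi}$ are discretized polynomials of the grid coordinates (e.g. $\mathbf{\Pi}=\mathbf{\Pi}^0$ the all-ones vector, or $\mathbf{\Pi}^1$ with rows $(1,x_i,y_i,z_i)$), but the statement holds for any $\mathbf{\Pi}$. For index sets $S,T$, $\mathbf{M}_{ST}$ denotes the submatrix of $\mathbf{M}$ with rows in $S$ and columns in $T$, and $\mathbf{\Pi}(S,:)$ the rows of $\mathbf{\Pi}$ indexed by $S$. *)

(* Defs.v *)
(* All matrices are indexed in the ORIGINAL coordinates
   V = 'I_n; index sets are {set 'I_n}, enumerated in increasing order. *)
From HB Require Import structures.
From mathcomp Require Import all_boot all_order all_algebra.
Unset Strict Implicit. Unset Printing Implicit Defensive.
Import Order.TTheory GRing.Theory Num.Theory.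
Local Open Scope ring_scope.

Section Defs.
Context {R : realFieldType}.

Definition sym_posdef {n} (A : 'M[R]_n) : Prop :=
  A^T = A /\ forall x : 'cV[R]_n, x != 0 -> 0 < (x^T *m A *m x) ord0 ord0.

Definition subm {n} (S T : {set 'I_n}) (A : 'M[R]_n) : 'M[R]_(#|S|, #|T|) :=
  \matrix_(i, j) A (enum_val i) (enum_val j).

Definition subr {n p} (S : {set 'I_n}) (A : 'M[R]_(n, p)) : 'M[R]_(#|S|, p) :=
  \matrix_(i, j) A (enum_val i) j.

Definition restr_rows {n p} (D : {set 'I_n}) (A : 'M[R]_(n, p)) : 'M[R]_(n, p) :=
  \matrix_(i, j) if i \in D then A i j else 0.

Definition selmx {m k} (f : 'I_m -> 'I_k) : 'M[R]_(m, k) :=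
  \matrix_(i, j) (f i == j)%:R.

Definition nbrs {n} (P : {set {set 'I_n}}) (B : {set 'I_n}) (M : 'M[R]_n) :=
  [set D in P | (D != B) && (subm B D M != 0)].

Definition Nset {n} (P : {set {set 'I_n}}) (B : {set 'I_n}) (M : 'M[R]_n) : {set 'I_n} :=
  \bigcup_(D in nbrs P B M) D.

Definition Wset {n} (P : {set {set 'I_n}}) (B : {set 'I_n}) (M : 'M[R]_n) : {set 'I_n} :=
  ~: (B :|: Nset P B M).

Definition Esel {n} (S : {set 'I_n}) : 'M[R]_(#|S|, n) :=
  selmx (fun i : 'I_#|S| => enum_val i).

(* the |B| x (g+1)pi matrix
   N = ( L^T Phi_B | Mhat_{BN_1} Phi_{N_1} | ... | Mhat_{BN_g} Phi_{N_g} ),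
   with N_j = enum_val j (j-th neighbour block), Mhat_{BN_j} = L^{-1} M_{BN_j}. *)
Definition Nmat {n p} (P : {set {set 'I_n}}) (B : {set 'I_n}) (M : 'M[R]_n) (L : 'M[R]_#|B|)
    (Pi : 'M[R]_(n, p)) :=
  row_mx (L^T *m subr B Pi)
    (\mxrow_(j < #|nbrs P B M|)
       (invmx L *m subm B (enum_val j) M *m subr (enum_val j) Pi)).

Definition Q1of {m r} (hr : (r <= m)%N) (Q : 'M[R]_m) : 'M[R]_(m, r) :=
  colsub (widen_ord hr) Q.

(* Btilde-matrix calB = diag(L Q, I) and M_(+), written in the original
   coordinates: the new coordinates of the B-block (columns of Q, i.e.
   Q1 then Q2) are identified with the elements of B in increasing order. *)
Definition calB {n} (P : {set {set 'I_n}}) (B : {set 'I_n}) (M : 'M[R]_n) (L Q : 'M[R]_#|B|)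
    : 'M[R]_n :=
  let EB := Esel B in
  let EN := Esel (Nset P B M) in
  let EW := Esel (Wset P B M) in
  EB^T *m (L *m Q) *m EB + EN^T *m EN + EW^T *m EW.

Definition Mplus {n} (P : {set {set 'I_n}}) (B : {set 'I_n}) (M : 'M[R]_n) (L Q : 'M[R]_#|B|)
    {r} (hr : (r <= #|B|)%N) : 'M[R]_n :=
  let NS := Nset P B M in
  let WS := Wset P B M in
  let EB := Esel B in
  let EN := Esel NS in
  let EW := Esel WS in
  let E1 := selmx (widen_ord hr) in   (* Q1-part of the B-block inside B *)
  let Q1 := Q1of hr Q in
  let MhBN := invmx L *m subm B NS M in
  let MhNB := MhBN^T in
  EB^T *m EB
  + EB^T *m E1^T *m (Q1^T *m MhBN) *m EN
  + EN^T *m (MhNB *m Q1) *m E1 *m EB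
  + EN^T *m subm NS NS M *m EN + EN^T *m subm NS WS M *m EW
  + EW^T *m subm WS NS M *m EN + EW^T *m subm WS WS M *m EW.

Definition Mtilde {n} (P : {set {set 'I_n}}) (B : {set 'I_n}) (M : 'M[R]_n) (L Q : 'M[R]_#|B|)
    {r} (hr : (r <= #|B|)%N) : 'M[R]_n :=
  calB P B M L Q *m Mplus P B M L Q hr *m (calB P B M L Q)^T.

End Defs.

(* Main.v *)
Require Import Defs.
From HB Require Import structures.
From mathcomp Require Import all_boot all_order all_algebra.
Import Order.TTheory GRing.Theory Num.Theory.
Local Open Scope ring_scope.

Set Implicit Arguments. Unset Strict Implicit. Unset Printing Implicit Defensive.
Section Helpers.
Variable R : realFieldType.

Lemma selmx_mulT m1 m2 k (f : 'I_m1 -> 'I_k) (g : 'I_m2 -> 'I_k) :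
  (selmx f : 'M[R]_(m1,k)) *m (selmx g)^T = \matrix_(i,j) (f i == g j)%:R.
Proof.
apply/matrixP=> i j; rewrite !mxE (bigD1 (f i)) //= !mxE eqxx mul1r.
rewrite big1 ?addr0; first by rewrite eq_sym.
by move=> l /negbTE hl; rewrite !mxE eq_sym hl mul0r.
Qed.

Lemma colsubE m k k' (g : 'I_k' -> 'I_k) (A : 'M[R]_(m,k)) :
  colsub g A = A *m (selmx g)^T.
Proof.
apply/matrixP=> i j; rewrite !mxE (bigD1 (g j)) //= !mxE eqxx mulr1.
by rewrite big1 ?addr0 // => l /negbTE hl; rewrite !mxE eq_sym hl mulr0.
Qed.

Lemma selmx_id m k (f : 'I_m -> 'I_k) : injective f ->
  (selmx f : 'M[R]_(m,k)) *m (selmx f)^T = 1%:M.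
Proof.
move=> fi; rewrite selmx_mulT; apply/matrixP=> i j; rewrite !mxE.
by rewrite (inj_eq fi).
Qed.

Definition proj {n} (S : {set 'I_n}) : 'M[R]_n := (Esel S)^T *m Esel S.

Lemma projE n (S : {set 'I_n}) :
  proj S = \matrix_(i,j) ((i == j) && (i \in S))%:R.
Proof.
apply/matrixP=> i j; rewrite !mxE.
under eq_bigr do rewrite !mxE.
rewrite -(big_enum_val (fun x : 'I_n => (x == i)%:R * (x == j)%:R : R)) /=.
case: (boolP (i \in S)) => iS.
  rewrite (bigD1 i) //= eqxx mul1r big1 ?addr0 ?andbT //.
  by move=> x /andP[_ /negbTE ->]; rewrite mul0r.
rewrite andbF big1 // => x xS; case: eqP => [ex|]; last by rewrite mul0r.
by move: xS; rewrite ex (negbTE iS).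
Qed.

Lemma Esel_id n (S : {set 'I_n}) : (Esel S : 'M[R]__) *m (Esel S)^T = 1%:M.
Proof. exact/selmx_id/enum_val_inj. Qed.

Lemma Esel_disj n (S T : {set 'I_n}) : [disjoint S & T] ->
  (Esel S : 'M[R]__) *m (Esel T)^T = 0.
Proof.
move=> dST; rewrite selmx_mulT; apply/matrixP=> i j; rewrite !mxE.
case: eqP => // e; move: (enum_valP i) (enum_valP j); rewrite e => h1 h2.
by rewrite (disjointFr dST h1) in h2.
Qed.

Lemma Esel_sub n (S T : {set 'I_n}) : S \subset T ->
  (Esel S : 'M[R]__) *m proj T = Esel S.
Proof.
move=> sST; apply/matrixP=> i j; rewrite projE !mxE (bigD1 (enum_val i)) //=.
rewrite !mxE eqxx mul1r (subsetP sST _ (enum_valP i)) andbT.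
by rewrite big1 ?addr0 // => l /negbTE hl; rewrite !mxE eq_sym hl mul0r.
Qed.

Lemma Esel_projdisj n (S T : {set 'I_n}) : [disjoint S & T] ->
  (Esel S : 'M[R]__) *m proj T = 0.
Proof. by move=> d; rewrite /proj mulmxA Esel_disj // mul0mx. Qed.

Lemma projT n (S : {set 'I_n}) : (proj S)^T = proj S.
Proof. by rewrite /proj trmx_mul trmxK. Qed.

Lemma restr_rowsE n q (D : {set 'I_n}) (A : 'M[R]_(n,q)) :
  restr_rows D A = proj D *m A.
Proof.
apply/matrixP=> i j; rewrite projE !mxE (bigD1 i) //= !mxE eqxx /=.
rewrite big1 ?addr0; first by case: (i \in D); rewrite ?mul1r ?mul0r.
by move=> l /negbTE hl; rewrite !mxE eq_sym hl mul0r.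
Qed.

Lemma rowsubE m k k' (g : 'I_k' -> 'I_k) (A : 'M[R]_(k,m)) :
  rowsub g A = selmx g *m A.
Proof.
apply/matrixP=> i j; rewrite !mxE (bigD1 (g i)) //= !mxE eqxx mul1r.
by rewrite big1 ?addr0 // => l /negbTE hl; rewrite !mxE eq_sym hl mul0r.
Qed.

Lemma submE n (S T : {set 'I_n}) (A : 'M[R]_n) :
  subm S T A = Esel S *m A *m (Esel T)^T.
Proof.
by rewrite -rowsubE -colsubE; apply/matrixP=> i j; rewrite !mxE.
Qed.

Lemma subrE n q (S : {set 'I_n}) (A : 'M[R]_(n,q)) :
  subr S A = Esel S *m A.
Proof.
by rewrite -rowsubE; apply/matrixP=> i j; rewrite !mxE.
Qed.

Lemma proj_unity n (S T : {set 'I_n}) : [disjoint S & T] ->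
  proj S + proj T + proj (~: (S :|: T)) = 1%:M.
Proof.
move=> d; apply/matrixP=> i j; rewrite !projE !mxE.
case: eqP => _; last by rewrite !addr0.
rewrite ?inE; case: (boolP (i \in S)) => iS /=.
  by rewrite (disjointFr d iS) !addr0.
by case: (i \in T); rewrite /= ?addr0 ?add0r.
Qed.

End Helpers.
Arguments proj {R n} S.
Section QF.
Variable R : realFieldType.

Definition qf {m k} (x : 'cV[R]_m) (A : 'M[R]_(m,k)) (y : 'cV[R]_k) : R :=
  (x^T *m A *m y) ord0 ord0.

Lemma qf_tr m k (x : 'cV[R]_m) (A : 'M[R]_(m,k)) y : qf x A y = qf y A^T x.
Proof.
rewrite /qf; have -> : y^T *m A^T *m x = (x^T *m A *m y)^T by rewrite !trmx_mul trmxK mulmxA.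
by rewrite [RHS]mxE.
Qed.

Lemma qfMl m k l (x : 'cV[R]_m) (A : 'M[R]_(m,k)) (B : 'M[R]_(k,l)) y :
  qf x (A *m B) y = qf (A^T *m x) B y.
Proof. by rewrite /qf trmx_mul trmxK !mulmxA. Qed.

Lemma qfMr m k l (x : 'cV[R]_m) (A : 'M[R]_(m,k)) (B : 'M[R]_(k,l)) y :
  qf x (A *m B) y = qf x A (B *m y).
Proof. by rewrite /qf !mulmxA. Qed.

Lemma qfDm m k (x : 'cV[R]_m) (A B : 'M[R]_(m,k)) y :
  qf x (A + B) y = qf x A y + qf x B y.
Proof. by rewrite /qf mulmxDr mulmxDl mxE. Qed.

Lemma qfDl m k (x x' : 'cV[R]_m) (A : 'M[R]_(m,k)) y :
  qf (x + x') A y = qf x A y + qf x' A y.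
Proof. by rewrite /qf linearD !mulmxDl mxE. Qed.

Lemma qfDr m k (x : 'cV[R]_m) (A : 'M[R]_(m,k)) y y' :
  qf x A (y + y') = qf x A y + qf x A y'.
Proof. by rewrite /qf mulmxDr mxE. Qed.

Lemma qfNl m k (x : 'cV[R]_m) (A : 'M[R]_(m,k)) y :
  qf (- x) A y = - qf x A y.
Proof. by rewrite /qf linearN !mulNmx mxE. Qed.

Lemma qfNr m k (x : 'cV[R]_m) (A : 'M[R]_(m,k)) y :
  qf x A (- y) = - qf x A y.
Proof. by rewrite /qf mulmxN mxE. Qed.

Lemma qfNm m k (x : 'cV[R]_m) (A : 'M[R]_(m,k)) y :
  qf x (- A) y = - qf x A y.
Proof. by rewrite /qf mulmxN mulNmx mxE. Qed.

Lemma qf0r m k (x : 'cV[R]_m) (A : 'M[R]_(m,k)) : qf x A 0 = 0.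
Proof. by rewrite /qf mulmx0 mxE. Qed.

Lemma qf0l m k (A : 'M[R]_(m,k)) y : qf 0 A y = 0.
Proof. by rewrite /qf trmx0 !mul0mx mxE. Qed.

Lemma qf1E m (x y : 'cV[R]_m) : qf x 1%:M y = \sum_i x i ord0 * y i ord0.
Proof. by rewrite /qf mulmx1 mxE; apply: eq_bigr => i _; rewrite mxE. Qed.

Lemma qf1_ge0 m (x : 'cV[R]_m) : 0 <= qf x 1%:M x.
Proof. by rewrite qf1E sumr_ge0 // => i _; rewrite -expr2 sqr_ge0. Qed.

Lemma qf1_gt0 m (x : 'cV[R]_m) : x != 0 -> 0 < qf x 1%:M x.
Proof.
move=> nx; rewrite lt_def qf1_ge0 andbT; apply/eqP => h.
move: nx; rewrite qf1E in h.
have H := psumr_eq0P (fun i _ => sqr_ge0 (x i ord0)) (etrans (eq_bigr _ (fun i _ => esym (expr2 _))) h).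
suff -> : x = 0 by rewrite eqxx.
apply/matrixP=> i j; rewrite (ord1 j) mxE.
by have /eqP := H i isT; rewrite sqrf_eq0 => /eqP.
Qed.

Lemma qfA1 m k (x : 'cV[R]_m) (A : 'M[R]_(m,k)) y :
  qf x A y = qf x 1%:M (A *m y).
Proof. by rewrite /qf mulmx1 mulmxA. Qed.

Lemma qf1_sym m (x y : 'cV[R]_m) : qf x 1%:M y = qf y 1%:M x.
Proof. by rewrite qf_tr trmx1. Qed.

Lemma proj_le r m (E : 'M[R]_(r,m)) (s : 'cV[R]_m) : E *m E^T = 1%:M ->
  qf (E^T *m E *m s) 1%:M (E^T *m E *m s) <= qf s 1%:M s.
Proof.
move=> EE; set ps := E^T *m E *m s.
have [ws [es Ews]] : exists ws, s = ps + ws /\ E *m ws = 0.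
  exists (s - ps); split; first by rewrite addrC subrK.
  by rewrite /ps mulmxBr !mulmxA EE mul1mx subrr.
have c0 : qf ps 1%:M ws = 0.
  by rewrite /ps -mulmxA -qfMl mulmx1 qfA1 Ews qf0r.
rewrite [in X in _ <= X]es qfDl !qfDr c0 qf1_sym c0 addr0 add0r.
by rewrite lerDl qf1_ge0.
Qed.

End QF.
From mathcomp Require Import lra.
Section Main.
Variable R : realFieldType.

Lemma partition_facts n (P : {set {set 'I_n}}) (B : {set 'I_n}) (M : 'M[R]_n) :
  partition P [set: 'I_n] -> B \in P ->
  [/\ [disjoint B & Nset P B M],
      (forall D, D \in P -> D != B -> [disjoint B & D]),
      (forall D, D \in nbrs P B M -> D \subset Nset P B M) &
      (forall D, D \in P -> D \notin nbrs P B M -> [disjoint D & Nset P B M])].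
Proof.
move=> /and3P[/eqP cov tI _] BP.
have dis : forall D D', D \in P -> D' \in P -> D != D' -> [disjoint D & D'].
  move=> D D' h1 h2 h3; move/trivIsetP: tI => tI. exact: tI.
split.
- apply: bigcup_disjoint => D; rewrite inE => /and3P[DP DB _].
  by apply: dis => //; rewrite eq_sym.
- by move=> D DP DB; apply: dis => //; rewrite eq_sym.
- by move=> D Dn; apply: bigcup_sup.
- move=> D DP Dn; apply: bigcup_disjoint => D' Dn'.
  apply: dis => //; first by move: Dn'; rewrite inE => /andP[].
  by apply: contraNneq Dn => ->.
Qed.

Lemma MBW0 n (P : {set {set 'I_n}}) (B : {set 'I_n}) (M : 'M[R]_n) :
  partition P [set: 'I_n] -> B \in P ->
  subm B (Wset P B M) M = 0.
Proof.
move=> part BP; have cov := cover_partition part.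
apply/matrixP=> i j; rewrite !mxE.
set x := enum_val i; set y := enum_val j.
have xB : x \in B := enum_valP i.
have yW : y \in Wset P B M := enum_valP j.
move: yW; rewrite !inE negb_or => /andP[yB yN].
have yc : y \in cover P by rewrite cov inE.
set D := pblock P y.
have DP : D \in P := pblock_mem yc.
have yD : y \in D by rewrite mem_pblock.
have DnB : D != B by apply: contraNneq yB => <-.
have Dn : D \notin nbrs P B M.
  by apply: contraNN yN => Dn; apply: (subsetP (bigcup_sup _ Dn)).
move: Dn; rewrite inE DP DnB /= negbK => /eqP h0.
have := congr1 (fun A : 'M[R]_(#|B|, #|D|) => A (enum_rank_in xB x) (enum_rank_in yD y)) h0.
by rewrite /= !mxE !enum_rankK_in.
Qed.

End Main.
Section Main2.
Variable R : realFieldType.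

Lemma span_fix m r q q' (Q1 : 'M[R]_(m,r)) (Nm : 'M[R]_(m,q)) (Z : 'M[R]_(m,q')) :
  Q1^T *m Q1 = 1%:M -> (Q1^T == Nm^T)%MS -> (Z^T <= Nm^T)%MS ->
  Q1 *m Q1^T *m Z = Z.
Proof.
move=> QQ /andP[_ h2] hZ; have /submxP[D hD] := submx_trans hZ h2.
rewrite -[Z]trmxK hD trmx_mul trmxK mulmxA -(mulmxA Q1) QQ mulmx1.
by [].
Qed.

Lemma widen_inj r m (hr : (r <= m)%N) : injective (widen_ord hr).
Proof. by move=> i j h; apply/val_inj; exact: (congr1 val h). Qed.

End Main2.
Unset Implicit Arguments. Set Strict Implicit.

Theorem lemma3p1 (R : realFieldType) (n p : nat) (M : 'M[R]_n)
    (P : {set {set 'I_n}}) (B : {set 'I_n}) (Pi : 'M[R]_(n, p))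
    (L Q : 'M[R]_#|B|) (r : nat) (hr : (r <= #|B|)%N) :
  sym_posdef M ->
  partition P [set: 'I_n] ->
  B \in P ->
  (* Cholesky factorization M_BB = L L^T *)
  is_trig_mx L -> (forall i, 0 < L i i) -> L *m L^T = subm B B M ->
  (* Q orthogonal, its first r columns Q1 span range(N) *)
  Q^T *m Q = 1%:M ->
  ((Q1of hr Q)^T == (Nmat P B M L Pi)^T)%MS ->
  (forall D, D \in P ->
     M *m restr_rows D Pi = Mtilde P B M L Q hr *m restr_rows D Pi)
  /\ sym_posdef (Mtilde P B M L Q hr).
Proof.
move=> [Msym Mpd] part BP Ltrig Lpos LLt QQ Qspan.
have [dBN dBD subN dDN] := partition_facts M part BP.
have MBW := MBW0 M part BP.
have Lu : L \in unitmx.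
  rewrite unitmxE det_trig // unitfE; apply: lt0r_neq0.
  by apply: prodr_gt0 => i _; apply: Lpos.
rewrite /Mtilde /Mplus /calB.
set NS := Nset P B M in dBN subN dDN MBW *.
set WS := Wset P B M in MBW *.
set b := (Esel B : 'M[R]_(#|B|, n)).
set nn := (Esel NS : 'M[R]_(#|NS|, n)).
set w := (Esel WS : 'M[R]_(#|WS|, n)).
have e_bb : b *m b^T = 1%:M by exact: Esel_id.
have e_nn : nn *m nn^T = 1%:M by exact: Esel_id.
have e_bn : b *m nn^T = 0 by exact: Esel_disj.
have e_nb : nn *m b^T = 0 by apply: Esel_disj; rewrite disjoint_sym.
have e_bw : b *m M *m w^T = 0 by rewrite -submE.
have e_LL : L *m L^T = b *m M *m b^T by rewrite LLt submE.
have unity : proj B + proj NS + proj WS = 1%:M :> 'M[R]_n.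
  by rewrite /WS /Wset -/NS; exact: proj_unity dBN.
pose R' := (1%:M - proj B : 'M[R]_n).
have eR' : R' = proj NS + proj WS.
 by rewrite /R' -unity -(addrA (proj B)) addrC addrK.
pose Mh := invmx L *m (b *m M *m nn^T).
have e_bMR : b *m M *m R' = L *m Mh *m nn.
  rewrite eR' mulmxDr /proj !mulmxA e_bw mul0mx addr0 mulmxV //.
  by rewrite mul1mx.
have e_bR : b *m R' = 0.
  by rewrite /R' mulmxBr mulmx1 /proj mulmxA e_bb mul1mx subrr.
have e_nR : nn *m R' = nn.
  by rewrite /R' mulmxBr mulmx1 /proj mulmxA e_nb mul0mx subr0.
have e_RT : R'^T = R' by rewrite /R' linearB /= trmx1 projT.
have e_Rb : R' *m b^T = 0 by rewrite -e_RT -trmx_mul e_bR trmx0.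
have e_Rn : R' *m nn^T = nn^T by rewrite -e_RT -trmx_mul e_nR.
have e_RR : R' *m R' = R'.
  by rewrite {1}/R' mulmxBl mul1mx /proj -mulmxA e_bR mulmx0 subr0.
set E1 := (selmx (widen_ord hr) : 'M[R]_(r, #|B|)).
have eQ1 : Q1of hr Q = Q *m E1^T by rewrite /Q1of colsubE.
have e_E1 : E1 *m E1^T = 1%:M by apply: selmx_id; apply: widen_inj.
have QQt : Q *m Q^T = 1%:M by apply: mulmx1C.
have Q1Q1 : (Q1of hr Q)^T *m Q1of hr Q = 1%:M.
  by rewrite eQ1 trmx_mul trmxK mulmxA -(mulmxA E1) QQ mulmx1 e_E1.
set Q1 := Q1of hr Q in Qspan eQ1 Q1Q1 *.
pose X := E1^T *m (Q1^T *m Mh).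
have eC : b^T *m (L *m Q) *m b + nn^T *m nn + w^T *m w = b^T *m (L *m Q) *m b + R'.
  by rewrite -addrA eR'.
have eMp : b^T *m b + b^T *m E1^T *m (Q1^T *m (invmx L *m subm B NS M)) *m nn +
    nn^T *m ((invmx L *m subm B NS M)^T *m Q1) *m E1 *m b +
    nn^T *m subm NS NS M *m nn + nn^T *m subm NS WS M *m w +
    w^T *m subm WS NS M *m nn + w^T *m subm WS WS M *m w
    = b^T *m b + b^T *m X *m nn + nn^T *m X^T *m b + R' *m M *m R'.
  rewrite /X /Mh eR' /proj !submE !trmx_mul !trmxK !mulmxDl !mulmxDr !mulmxA !addrA.
  by [].
rewrite eC eMp.
set C := b^T *m (L *m Q) *m b + R'.
set Mp := b^T *m b + b^T *m X *m nn + nn^T *m X^T *m b + R' *m M *m R'.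
have eCb : C *m b^T = b^T *m (L *m Q).
  by rewrite /C mulmxDl -mulmxA e_bb mulmx1 e_Rb addr0.
have eCn : C *m nn^T = nn^T.
  by rewrite /C mulmxDl -mulmxA e_bn mulmx0 add0r e_Rn.
have eCR : C *m R' = R'.
  by rewrite /C mulmxDl -mulmxA e_bR mulmx0 add0r e_RR.
have eCbT : forall k (A : 'M[R]_(k, #|B|)), A *m b *m C^T = A *m (L *m Q)^T *m b.
  by move=> k A; rewrite -mulmxA -[b *m _]trmxK trmx_mul trmxK eCb trmx_mul trmxK mulmxA.
have eCnT : forall k (A : 'M[R]_(k, #|NS|)), A *m nn *m C^T = A *m nn.
  by move=> k A; rewrite -mulmxA -[nn *m _]trmxK trmx_mul trmxK eCn trmxK.
have eCRT : forall k (A : 'M[R]_(k, n)), A *m R' *m C^T = A *m R'.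
  by move=> k A; rewrite -mulmxA -[R' *m _]trmxK trmx_mul trmxK e_RT eCR e_RT.
have eXd : X = E1^T *m (Q1^T *m Mh) by [].
have eMhd : Mh = invmx L *m (b *m M *m nn^T) by [].
have eR'd : R' = 1%:M - proj B by [].
have eCd : C = b^T *m (L *m Q) *m b + R' by [].
clearbody C X Mh R'.
have gQQ : forall k (A : 'M[R]_(k, #|B|)), A *m Q *m Q^T = A.
  by move=> k A; rewrite -mulmxA QQt mulmx1.
have gQ1 : forall k (A : 'M[R]_(k, #|B|)), A *m Q *m E1^T = A *m Q1.
  by move=> k A; rewrite eQ1 mulmxA.
have gQ1T : forall k (A : 'M[R]_(k, r)), A *m E1 *m Q^T = A *m Q1^T.
  by move=> k A; rewrite eQ1 trmx_mul trmxK mulmxA.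
have eA : C *m Mp *m C^T = b^T *m L *m L^T *m b
   + b^T *m L *m Q1 *m Q1^T *m Mh *m nn + nn^T *m Mh^T *m Q1 *m Q1^T *m L^T *m b
   + R' *m M *m R'.
  rewrite /Mp !mulmxDr !mulmxDl !mulmxA eCb eCn eCR !eCbT !eCnT !eCRT eXd.
  rewrite !trmx_mul !trmxK !mulmxA gQQ gQ1 gQ1T.
  by [].
have e1 : proj B + R' = 1%:M by rewrite eR'd addrC subrK.
have e_RMb : R' *m M *m b^T = nn^T *m Mh^T *m L^T.
  have := congr1 trmx e_bMR; rewrite !trmx_mul e_RT Msym !mulmxA => <-.
  by [].
have gLL : forall k (A : 'M[R]_(k, #|B|)), A *m b *m M *m b^T = A *m L *m L^T.
  by move=> k A; have := congr1 (mulmx A) e_LL; rewrite !mulmxA => ->.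
have gbMR : forall k (A : 'M[R]_(k, #|B|)), A *m b *m M *m R' = A *m L *m Mh *m nn.
  by move=> k A; have := congr1 (mulmx A) e_bMR; rewrite !mulmxA => ->.
have eM : M = b^T *m L *m L^T *m b + b^T *m L *m Mh *m nn
   + nn^T *m Mh^T *m L^T *m b + R' *m M *m R'.
  transitivity ((proj B + R') *m M *m (proj B + R')).
    by rewrite e1 mul1mx mulmx1.
  by rewrite !mulmxDl !mulmxDr /proj !mulmxA gLL gbMR e_RMb !addrA.
have hMpT : Mp^T = Mp.
  rewrite /Mp !linearD /= !trmx_mul !trmxK e_RT Msym !mulmxA.
  congr (_ + _); rewrite -!addrA; congr (_ + _); exact: addrC.
split.
  move=> D DP; rewrite restr_rowsE.
  have hZ : Q1 *m Q1^T *m (Mh *m nn *m proj D *m Pi) = Mh *m nn *m proj D *m Pi.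
    case: (boolP (D \in nbrs P B M)) => Dn.
      have hsub := @Esel_sub R _ _ _ (subN D Dn).
      have gsub : forall k (A : 'M[R]_(k, #|NS|)),
          A *m nn *m (Esel D)^T = A *m (nn *m (Esel D)^T).
        by move=> k A; rewrite mulmxA.
      have eZ : Mh *m nn *m proj D *m Pi = invmx L *m subm B D M *m subr D Pi.
        have := congr1 trmx hsub; rewrite /proj !trmx_mul trmxK => hs.
        rewrite eMhd submE subrE /proj !mulmxA -(mulmxA _ (nn^T) nn).
        rewrite -(mulmxA _ (nn^T *m nn)) hs.
        by [].
      rewrite eZ; apply: (span_fix Q1Q1 Qspan).
      move: (enum_rank_in Dn D) (enum_rankK_in Dn Dn) => j ej.
      rewrite -ej.
      set F := (\mxrow_(j0 < #|nbrs P B M|)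
         (invmx L *m subm B (enum_val j0) M *m subr (enum_val j0) Pi)).
      have -> : invmx L *m subm B (enum_val j) M *m subr (enum_val j) Pi
          = submxrow F j by rewrite mxrowK.
      rewrite /submxrow colsubE.
      have -> : F = Nmat P B M L Pi *m col_mx 0 1%:M.
        by rewrite /Nmat mul_row_col mulmx0 add0r mulmx1.
      by rewrite -mulmxA trmx_mul submxMl.
    have hz : nn *m proj D = 0.
      by apply: Esel_projdisj; rewrite disjoint_sym; apply: dDN.
    by rewrite -(mulmxA Mh) hz mulmx0 !mul0mx mulmx0.
  have hW : Q1 *m Q1^T *m (L^T *m b *m proj D *m Pi) = L^T *m b *m proj D *m Pi.
    case: (eqVneq D B) => DB.
      rewrite DB -(mulmxA (L^T)) Esel_sub //.
      rewrite -[L^T *m Esel B *m Pi]mulmxA -subrE.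
      apply: (span_fix Q1Q1 Qspan).
      have -> : L^T *m subr B Pi = Nmat P B M L Pi *m col_mx 1%:M 0.
        by rewrite /Nmat mul_row_col mulmx0 addr0 mulmx1.
      by rewrite trmx_mul submxMl.
    by rewrite -[L^T *m b *m proj D]mulmxA Esel_projdisj ?mulmx0 ?mul0mx ?mulmx0 //; apply: dBD.
  have gZ : forall k (A : 'M[R]_(k, #|B|)),
      A *m Q1 *m Q1^T *m Mh *m nn *m (Esel D)^T *m Esel D *m Pi = A *m Mh *m nn *m (Esel D)^T *m Esel D *m Pi.
    by move=> k A; have := congr1 (mulmx A) hZ; rewrite !mulmxA.
  have gW : forall k (A : 'M[R]_(k, #|B|)),
      A *m Q1 *m Q1^T *m L^T *m b *m (Esel D)^T *m Esel D *m Pi = A *m L^T *m b *m (Esel D)^T *m Esel D *m Pi.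
    by move=> k A; have := congr1 (mulmx A) hW; rewrite !mulmxA.
  by rewrite eA {1}eM !mulmxDl !mulmxA gZ gW.
have key : forall y : 'cV[R]_n, y != 0 -> 0 < qf y Mp y.
  move=> y ny.
  have [u eu] : {u | u = b *m y} by exists (b *m y).
  have [v ev] : {v | v = nn *m y} by exists (nn *m y).
  have [z ez] : {z | z = R' *m y} by exists (R' *m y).
  have [a ea] : {a | a = Mh *m v} by exists (Mh *m v).
  have [t et] : {t | t = X *m v} by exists (X *m v).
  have [c ec] : {c | c = - ((invmx L)^T *m a)} by exists (- ((invmx L)^T *m a)).
  have [x' ex'] : {x' | x' = z + b^T *m c} by exists (z + b^T *m c).
  have t1 : qf y (b^T *m b) y = qf u 1%:M u by rewrite qfMl trmxK qfA1 eu.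
  have t2 : qf y (b^T *m X *m nn) y = qf u 1%:M t.
    by rewrite qfMr qfMl trmxK qfA1 eu et ev.
  have t3 : qf y (nn^T *m X^T *m b) y = qf u 1%:M t.
    by rewrite qf_tr !trmx_mul !trmxK mulmxA t2.
  have t4 : qf y (R' *m M *m R') y = qf z M z by rewrite qfMr qfMl e_RT ez.
  have h1 : qf y Mp y = qf u 1%:M u + qf u 1%:M t + qf u 1%:M t + qf z M z.
    by rewrite /Mp !qfDm t1 t2 t3 t4.
  have hLc : L^T *m c = - a.
    by rewrite ec mulmxN mulmxA -trmx_mul mulVmx // trmx1 mul1mx.
  have ebMz : b *m M *m z = L *m a.
    by rewrite ez ea ev mulmxA e_bMR !mulmxA.
  have k1 : qf (b^T *m c) M z = - qf a 1%:M a.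
    by rewrite -qfMl qfA1 ebMz -qfA1 qf_tr qfA1 hLc qfNr.
  have k2 : qf z M (b^T *m c) = - qf a 1%:M a by rewrite qf_tr Msym k1.
  have k3 : qf (b^T *m c) M (b^T *m c) = qf a 1%:M a.
    rewrite -qfMl qfA1 mulmxA -e_LL -mulmxA hLc -qfA1 qf_tr qfA1 hLc.
    by rewrite qfNl qfNr opprK.
  have h2 : qf z M z = qf x' M x' + qf a 1%:M a.
    rewrite ex' qfDl !qfDr k1 k2 k3; lra.
  have h3 : qf t 1%:M t <= qf a 1%:M a.
    have et' : t = E1^T *m E1 *m (Q^T *m a).
      by rewrite et eXd ea eQ1 trmx_mul trmxK !mulmxA.
    rewrite et'; apply: le_trans (proj_le _ e_E1) _.
    by rewrite -qfA1 -qfMl QQt.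
  have h4 : qf (u + t) 1%:M (u + t) = qf u 1%:M u + 2 * qf u 1%:M t + qf t 1%:M t.
    rewrite qfDl !qfDr (qf1_sym t u); lra.
  case: (eqVneq x' 0) => hx'.
    have hv : v = 0.
      have : nn *m x' = v.
        by rewrite ex' mulmxDr ez mulmxA e_nR mulmxA e_nb mul0mx addr0 ev.
      by rewrite hx' mulmx0.
    have ha : a = 0 by rewrite ea hv mulmx0.
    have ht : t = 0 by rewrite et hv mulmx0.
    have hc : c = 0 by rewrite ec ha mulmx0 oppr0.
    have hz : z = 0 by move: ex'; rewrite hx' hc mulmx0 addr0.
    have hu : u != 0.
      apply: contra ny => /eqP hu0.
      by rewrite -[y]mul1mx -e1 mulmxDl /proj -mulmxA -eu -ez hu0 hz mulmx0 addr0.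
    by rewrite h1 ht hz qf0r qf0l !addr0; exact: qf1_gt0.
  have := Mpd x' hx'; rewrite -/(qf x' M x') => hpos.
  have := qf1_ge0 (u + t); lra.
have hCC : C *m (b^T *m (Q^T *m invmx L) *m b + R') = 1%:M.
  rewrite mulmxDr !mulmxA eCb eCR !mulmxA gQQ -(mulmxA (b^T)) mulmxV // mulmx1 -e1.
  by [].
split.
  rewrite !trmx_mul trmxK hMpT; rewrite !mulmxA; by [].
move=> x nx.
rewrite -/(qf x _ x) qfMr qfMl ?trmxK.
apply: key; apply: contra nx => /eqP h.
by rewrite -[x]mul1mx -trmx1 -hCC trmx_mul -(mulmxA _ (C^T)) h mulmx0.
Qed.
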